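(* Let $G$, $m$ and $\mathrm{Stone}(G,m)$ be as below, let $i$ be a non-source vertex of $G$ with predecessors $i'$ and $i''$, let $1\le j\le m$, and let $F=\{\overline r_{j_1},\dots,\overline r_{j_\ell}\}$ be a set of negated $r$-literals with $\overline r_j\notin F$. Then there is a regular tree-like resolution derivation of the clause $F\lor\overline p_{i,j}\lor r_j$ from the clauses of $\mathrm{Stone}(G,m)$ together with the clauses $\overline p_{i',k}\lor r_k$ and $\overline p_{i'',k}\lor r_k$ for $1\le k\le m$, which has size $O(m^2)$ and whose resolution variables are only among the variables $r_k$ with $k\notin\{j,j_1,\dots,j_\ell\}$ and the variables $p_{i',k}$ and $p_{i'',k}$ for $1\le k\le m$.
   Context: Let $G=(V,E)$ be a directed acyclic graph with vertex set $V=\{1,\dots,N\}$, single sink $1$, each non-source vertex of in-degree exactly $2$, edges $(i',i)$ satisfying $i'>i$, sources exactly $n+1,\dots,N$; let $m\ge N$. $\mathrm{Stone}(G,m)$ consists of: $\bigvee_{j=1}^m p_{i,j}$ for each vertex $i$; $\overline p_{i,j}\lor r_j$ for each source $i$ and each $j$; $\overline p_{1,j}\lor\overline r_j$ for each $j$; and $\overline p_{i',j'}\lor\overline r_{j'}\lor\overline p_{i'',j''}\lor\overline r_{j''}\lor\overline p_{i,j}\lor r_j$ whenever $i',i''$ are the two predecessors of $i$ and $j\notin\{j',j''\}$. A resolution inference derives $(A\setminus\{x\})\cup(B\setminus\{\overline x\})$ from $A\ni x$ and $B\ni\overline x$. A derivation is tree-like if its underlying dag is a tree, and a derivation of a clause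 $C$ is regular if no variable is used as a resolution variable more than once along any path and no variable occurring in $C$ is used as a resolution variable. Size = number of clauses; the $O(\cdot)$ constant is absolute. *)

(* Defs.v *)
From HB Require Import structures.
From mathcomp Require Import all_boot.
Set Implicit Arguments. Unset Strict Implicit. Unset Printing Implicit Defensive.

(** Propositional variables of Stone(G,m): [P i j] is p_{i,j}, [R j] is r_j. *)
Inductive var := P of nat & nat | R of nat.

Definition var_eqb (x y : var) : bool :=
  match x, y with
  | P a b, P c d => (a == c) && (b == d)
  | R a, R b => a == b
  | _, _ => false
  end.

Lemma var_eqP : Equality.axiom var_eqb.
Proof.
case=> [a b|a] [c d|c] /=; try by constructor.
- by apply: (iffP andP) => [[/eqP -> /eqP ->]|[-> ->]].
- by apply: (iffP eqP) => [->|[->]].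
Qed.

HB.instance Definition _ := hasDecEq.Build var var_eqP.

Definition lit := (var * bool)%type.
Definition pos (v : var) : lit := (v, true).
Definition neg (v : var) : lit := (v, false).

(** Clauses are sets of literals, represented by sequences compared with [=i]. *)
Definition clause := seq lit.

(** The graph G: vertices 1..N, edge relation E (E a b means edge (a,b)). *)
Definition indeg (N : nat) (E : rel nat) (v : nat) : nat :=
  count (fun u => E u v) (iota 1 N).

Definition stone_dag (N n : nat) (E : rel nat) : Prop :=
  [/\
      (forall a b, E a b -> [/\ 1 <= b, b < a & a <= N]),
      (forall v, 1 <= v <= N -> (indeg N E v == 0) = (n < v)),
      (forall v, 1 <= v <= N -> v <= n -> indeg N E v = 2)
    &
      (forall v, 1 <= v <= N -> ((forall w, ~~ E v w) <-> v = 1))].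

Definition stone_axiom (N n : nat) (E : rel nat) (m : nat) (C : clause) : Prop :=
  [\/ exists i, 1 <= i <= N /\ C = [seq pos (P i k) | k <- iota 1 m],
      exists i k, [/\ n < i <= N, 1 <= k <= m & C = [:: neg (P i k); pos (R k)]],
      exists k, 1 <= k <= m /\ C = [:: neg (P 1 k); neg (R k)]
    | exists i i1 i2 k k1 k2,
        [/\ [/\ 1 <= i <= N, E i1 i, E i2 i & i1 != i2],
            [/\ 1 <= k <= m, 1 <= k1 <= m & 1 <= k2 <= m],
            k != k1, k != k2 &
            C = [:: neg (P i1 k1); neg (R k1); neg (P i2 k2); neg (R k2);
                    neg (P i k); pos (R k)]]].

Inductive deriv := Leaf of clause | Res of var & deriv & deriv.

Definition resolvent (v : var) (A B : clause) : clause :=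
  [seq l <- A | l != pos v] ++ [seq l <- B | l != neg v].

Fixpoint concl (d : deriv) : clause :=
  match d with
  | Leaf C => C
  | Res v d1 d2 => resolvent v (concl d1) (concl d2)
  end.

Fixpoint valid (H : clause -> Prop) (d : deriv) : Prop :=
  match d with
  | Leaf C => H C
  | Res v d1 d2 =>
      [/\ pos v \in concl d1, neg v \in concl d2, valid H d1 & valid H d2]
  end.

Fixpoint dsize (d : deriv) : nat :=
  match d with
  | Leaf _ => 1
  | Res _ d1 d2 => (dsize d1 + dsize d2).+1
  end.

Fixpoint resvars (d : deriv) : seq var :=
  match d with
  | Leaf _ => [::]
  | Res v d1 d2 => v :: (resvars d1 ++ resvars d2)
  end.

Fixpoint path_regular (d : deriv) : bool :=
  match d with
  | Leaf _ => true
  | Res v d1 d2 =>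
      [&& v \notin resvars d1 ++ resvars d2, path_regular d1 & path_regular d2]
  end.

Definition regular_of (C : clause) (d : deriv) : Prop :=
  path_regular d /\
  forall v, v \in resvars d -> forall b : bool, (v, b) \notin C.

Definition hyps (N n : nat) (E : rel nat) (m i1 i2 : nat) (C : clause) : Prop :=
  exists A, C =i A /\
    (stone_axiom N n E m A \/
     exists k, 1 <= k <= m /\
       (A = [:: neg (P i1 k); pos (R k)] \/ A = [:: neg (P i2 k); pos (R k)])).

Definition target (i j : nat) (js : seq nat) : clause :=
  [seq neg (R x) | x <- js] ++ [:: neg (P i j); pos (R j)].

(* Main.v *)
Require Import Defs.
From HB Require Import structures.
From mathcomp Require Import all_boot. From mathcomp Require Import zify.

Definition chainP (a : nat) (ks : seq nat) (f : nat -> deriv) (d0 : deriv) :=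
  foldl (fun d k => Res (P a k) d (f k)) d0 ks.

Lemma mem_resolvent v A B l :
  (l \in resolvent v A B) = ((l \in A) && (l != pos v)) || ((l \in B) && (l != neg v)).
Proof. by rewrite /resolvent mem_cat !mem_filter ![_ && (_ \in _)]andbC. Qed.

Lemma chain_valid H a ks f d0 :
  valid H d0 -> (forall k, k \in ks -> valid H (f k) /\ neg (P a k) \in concl (f k)) ->
  (forall k, k \in ks -> pos (P a k) \in concl d0) -> uniq ks ->
  valid H (chainP a ks f d0).
Proof.
elim: ks d0 => [|k ks IH] d0 //= V0 Hf Hp /andP[nk u].
apply: IH => //.
- have [V1 N1] := Hf k (mem_head _ _).
  by split => //; apply: Hp; rewrite mem_head.
- by move=> k' kk; apply: Hf; rewrite inE kk orbT.
- move=> k' kk; rewrite mem_resolvent Hp ?inE ?kk ?orbT //=.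
  apply/orP; left; apply/eqP => -[e]; by move: nk; rewrite -e kk.
Qed.

Lemma chain_concl_sub a ks f d0 l :
  l \in concl (chainP a ks f d0) ->
  (l \in concl d0 /\ forall k, k \in ks -> l != pos (P a k)) \/
  (exists2 k, k \in ks & (l \in concl (f k)) && (l != neg (P a k))).
Proof.
elim: ks d0 => [|k ks IH] d0 /=; first by left.
move=> /IH [[]|[k' kk' H]].
- rewrite mem_resolvent => /orP[/andP[l0 lk] lks|H].
  + by left; split => // k'; rewrite inE => /orP[/eqP->//|]; apply: lks.
  + by right; exists k; rewrite ?mem_head.
- by right; exists k'; rewrite // inE kk' orbT.
Qed.

Lemma chain_concl_sup a ks f d0 l k :
  k \in ks -> l \in concl (f k) -> l != neg (P a k) ->
  (forall k', l != pos (P a k')) -> l \in concl (chainP a ks f d0).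
Proof.
move=> + + + lp.
have keep : forall ks d0, l \in concl d0 -> l \in concl (chainP a ks f d0).
  elim=> [|k1 ks1 IH1] d1 H1 //=; apply: IH1; by rewrite /= mem_resolvent H1 lp.
elim: ks d0 => [|k1 ks IH] d0 //= kk lf ln.
move: kk; rewrite inE => /orP[/eqP ek|kk]; last exact: IH.
apply: keep; subst k1; by rewrite mem_resolvent lf ln orbT.
Qed.

Lemma chain_resvars a ks f d0 v :
  v \in resvars (chainP a ks f d0) ->
  v \in resvars d0 \/ exists2 k, k \in ks & (v = P a k \/ v \in resvars (f k)).
Proof.
elim: ks d0 => [|k ks IH] d0 /=; first by left.
move=> /IH [|[k' kk' H]].
- rewrite inE mem_cat => /orP[/eqP->|/orP[]]; first by right; exists k; rewrite ?mem_head //; left.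
  + by left.
  + by move=> H; right; exists k; rewrite ?mem_head //; right.
- by right; exists k'; rewrite // inE kk' orbT.
Qed.

Lemma chain_regular a ks f d0 :
  path_regular d0 -> (forall k, k \in ks -> path_regular (f k)) -> uniq ks ->
  (forall k, k \in ks -> P a k \notin resvars d0) ->
  (forall k k', k \in ks -> k' \in ks -> P a k \notin resvars (f k')) ->
  path_regular (chainP a ks f d0).
Proof.
elim: ks d0 => [|k ks IH] d0 //= R0 Rf /andP[nk u] N0 Nf.
apply: IH => //.
- rewrite /= Rf ?mem_head // R0 andbT mem_cat negb_or N0 ?mem_head //.
  by rewrite Nf ?mem_head.
- by move=> k' kk; apply: Rf; rewrite inE kk orbT.
- move=> k' kk /=; rewrite inE mem_cat negb_or.
  have -> : (P a k' == P a k) = false.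
    by apply/eqP => -[e]; move: nk; rewrite -e kk.
  rewrite negb_or N0 ?inE ?kk ?orbT //= Nf // inE ?kk ?eqxx ?orbT //.
- move=> k1 k2 k1k k2k. apply: Nf; by rewrite inE ?k1k ?k2k orbT.
Qed.

Lemma chain_size a ks f d0 b :
  (forall k, k \in ks -> dsize (f k) <= b) ->
  dsize (chainP a ks f d0) <= dsize d0 + size ks * b.+1.
Proof.
elim: ks d0 => [|k ks IH] d0 /=; first by rewrite addn0.
move=> Hb; apply: leq_trans (IH _ _) _.
  by move=> k' kk; apply: Hb; rewrite inE kk orbT.
have := Hb k (mem_head _ _); rewrite /= mulSn; lia.
Qed.

Definition peb i i1 i2 j k k2 : clause :=
  [:: neg (P i1 k); neg (R k); neg (P i2 k2); neg (R k2); neg (P i j); pos (R j)].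

Definition Zd i i1 i2 j (js : seq nat) k k2 :=
  if k2 == j then Leaf [:: neg (P i2 j); pos (R j)]
  else if (k2 == k) || (k2 \in js) then Leaf (peb i i1 i2 j k k2)
  else Res (R k2) (Leaf [:: neg (P i2 k2); pos (R k2)]) (Leaf (peb i i1 i2 j k k2)).

Lemma tgt_negR i j js x : x \in js -> neg (R x) \in target i j js.
Proof. by move=> xj; rewrite mem_cat; apply/orP; left; apply: (map_f (fun y => neg (R y))). Qed.
Lemma tgt_p i j js : neg (P i j) \in target i j js.
Proof. by rewrite mem_cat !inE eqxx orbT. Qed.
Lemma tgt_r i j js : pos (R j) \in target i j js.
Proof. by rewrite mem_cat !inE eqxx !orbT. Qed.

Definition okZ i i1 i2 j js k k2 (l : lit) :=
  [|| l == neg (P i2 k2), l == neg (P i1 k), l == neg (R k) | l \in target i j js].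

Lemma Z_sub i i1 i2 j js k k2 l :
  l \in concl (Zd i i1 i2 j js k k2) -> okZ i i1 i2 j js k k2 l.
Proof.
rewrite /Zd /okZ; case: eqP => [->|nj].
  rewrite /= !inE => /orP[]/eqP->; by rewrite ?eqxx ?tgt_r ?orbT.
case: ifP => [c|c].
  rewrite /= !inE => /orP[/eqP->|/orP[/eqP->|/orP[/eqP->|/orP[/eqP->|/orP[/eqP->|/eqP->]]]]];
   rewrite ?eqxx ?tgt_p ?tgt_r ?orbT //.
  by case/orP: c => [/eqP->|/tgt_negR ->]; rewrite ?eqxx ?orbT.
rewrite /= mem_resolvent /peb !inE.
case/orP=> /andP[+ ne]; [move=> /orP[]/eqP e|
  move=> /orP[/eqP e|/orP[/eqP e|/orP[/eqP e|/orP[/eqP e|/orP[/eqP e|/eqP e]]]]]];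
  subst l; rewrite ?eqxx ?tgt_p ?tgt_r ?orbT //; by rewrite eqxx in ne.
Qed.

Lemma Z_negP i i1 i2 j js k k2 : neg (P i2 k2) \in concl (Zd i i1 i2 j js k k2).
Proof.
rewrite /Zd; case: eqP => [->|nj]; first by rewrite mem_head.
case: ifP => c; first by rewrite /= !inE eqxx !orbT.
by rewrite /= mem_resolvent mem_head.
Qed.

Lemma Z_sup i i1 i2 j js k k2 l : k2 != j ->
  l \in [:: neg (P i1 k); neg (R k); neg (P i j); pos (R j)] ->
  l \in concl (Zd i i1 i2 j js k k2).
Proof.
move=> nj; rewrite /Zd (negbTE nj).
case: ifP => c.
  by rewrite /= !inE => /orP[/eqP->|/orP[/eqP->|/orP[/eqP->|/eqP->]]]; rewrite eqxx ?orbT.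
have nk : k2 != k by case/norP: c.
rewrite /= mem_resolvent /peb !inE => /orP[/eqP->|/orP[/eqP->|/orP[/eqP->|/eqP->]]];
  rewrite ?eqxx ?orbT //=.
- apply/orP; right; apply/eqP => -[e]; by rewrite e eqxx in nk.
- by apply/orP; right; apply/eqP => -[].
Qed.

Lemma Z_res i i1 i2 j js k k2 v : v \in resvars (Zd i i1 i2 j js k k2) ->
  [/\ v = R k2, k2 != j, k2 \notin js & k2 != k].
Proof.
rewrite /Zd; case: eqP => [//|/eqP nj]; case: ifP => c //=.
rewrite inE => /eqP ->; split => //; by case/norP: c.
Qed.

Lemma Z_reg i i1 i2 j js k k2 : path_regular (Zd i i1 i2 j js k k2).
Proof. by rewrite /Zd; case: eqP => //; case: ifP. Qed.

Lemma Z_size i i1 i2 j js k k2 : dsize (Zd i i1 i2 j js k k2) <= 3.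
Proof. by rewrite /Zd; case: eqP => //; case: ifP. Qed.

Lemma Z_valid N n (E : rel nat) m i i1 i2 j js k k2 :
  1 <= i <= N -> E i1 i -> E i2 i -> i1 != i2 -> 1 <= j <= m ->
  1 <= k <= m -> 1 <= k2 <= m -> k != j ->
  valid (hyps N n E m i1 i2) (Zd i i1 i2 j js k k2).
Proof.
move=> Hi E1 E2 n12 Hj Hk Hk2 nkj.
have Dk : forall k', 1 <= k' <= m -> hyps N n E m i1 i2 [:: neg (P i2 k'); pos (R k')].
  by move=> k' Hk'; exists [:: neg (P i2 k'); pos (R k')]; split => //; right; exists k'; split => //; right.
have Pk : k2 != j -> hyps N n E m i1 i2 (peb i i1 i2 j k k2).
  move=> nj; exists (peb i i1 i2 j k k2); split => //; left; apply: Or44.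
  exists i, i1, i2, j, k, k2; split => //; by rewrite eq_sym.
rewrite /Zd; case: eqP => [_|/eqP nj]; first by apply: Dk.
case: ifP => c /=; first exact: Pk.
split; [by rewrite /= !inE eqxx !orbT | by rewrite /= /peb !inE eqxx !orbT | exact: Dk | exact: Pk].
Qed.

Definition cover a m : clause := [seq pos (P a k) | k <- iota 1 m].

Definition Yd i i1 i2 j js m k :=
  chainP i2 (iota 1 m) (Zd i i1 i2 j js k) (Leaf (cover i2 m)).

Lemma Y_valid N n (E : rel nat) m i i1 i2 j js k :
  1 <= i <= N -> E i1 i -> E i2 i -> i1 != i2 -> 1 <= j <= m ->
  1 <= k <= m -> k != j -> 1 <= i2 <= N ->
  valid (hyps N n E m i1 i2) (Yd i i1 i2 j js m k).
Proof.
move=> Hi E1 E2 n12 Hj Hk nkj Hi2.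
apply: chain_valid; last exact: iota_uniq.
- exists (cover i2 m); split => //; left; apply: Or41; by exists i2.
- move=> k2; rewrite mem_iota => Hk2; split; last exact: Z_negP.
  apply: Z_valid => //; lia.
- move=> k2 kk; exact: (map_f (fun y => pos (P i2 y))).
Qed.

Lemma Y_sub i i1 i2 j js m k l : l \in concl (Yd i i1 i2 j js m k) ->
  [|| l == neg (P i1 k), l == neg (R k) | l \in target i j js].
Proof.
case/chain_concl_sub => [[/= /mapP [k2 kk ->] H]|[k2 kk /andP [lz ln]]].
  by have := H _ kk; rewrite eqxx.
move: (@Z_sub _ _ _ _ _ _ _ _ lz); rewrite /okZ (negbTE ln) /=; done.
Qed.

Lemma Y_sup i i1 i2 j js m k k2 l : k2 \in iota 1 m -> k2 != j ->
  i1 != i2 -> i != i2 ->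
  l \in [:: neg (P i1 k); neg (R k); neg (P i j); pos (R j)] ->
  l \in concl (Yd i i1 i2 j js m k).
Proof.
move=> kk nj n12 ni2 Hl; apply: (@chain_concl_sup _ _ _ _ _ _ kk (@Z_sup _ _ _ _ _ _ _ _ nj Hl)).
- move: Hl; rewrite !inE => /orP[/eqP->|/orP[/eqP->|/orP[/eqP->|/eqP->]]] //.
  + by apply/eqP => -[e _]; rewrite e eqxx in n12.
  + by apply/eqP => -[e _]; rewrite e eqxx in ni2.
- move=> k'; move: Hl; rewrite !inE => /orP[/eqP->|/orP[/eqP->|/orP[/eqP->|/eqP->]]]; by apply/eqP => -[].
Qed.

Lemma Y_res i i1 i2 j js m k v : v \in resvars (Yd i i1 i2 j js m k) ->
  (exists2 k2, 1 <= k2 <= m & v = P i2 k2) \/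
  (exists k2, [/\ v = R k2, k2 != j, k2 \notin js & k2 != k]).
Proof.
case/chain_resvars => [//|[k2 kk [->|/Z_res H]]].
  by left; exists k2 => //; move: kk; rewrite mem_iota; lia.
by right; exists k2.
Qed.

Lemma Y_reg i i1 i2 j js m k : path_regular (Yd i i1 i2 j js m k).
Proof.
apply: chain_regular => //.
- by move=> *; exact: Z_reg.
- exact: iota_uniq.
- by move=> k1 k2 _ _; apply/negP => /Z_res [].
Qed.

Lemma Y_size i i1 i2 j js m k : dsize (Yd i i1 i2 j js m k) <= 1 + m * 4.
Proof.
have := @chain_size i2 (iota 1 m) (Zd i i1 i2 j js k) (Leaf (cover i2 m)) 3.
by rewrite size_iota => ->// *; exact: Z_size.
Qed.

Definition Xd i i1 i2 j js m k :=
  if k == j then Leaf [:: neg (P i1 j); pos (R j)]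
  else if k \in js then Yd i i1 i2 j js m k
  else Res (R k) (Leaf [:: neg (P i1 k); pos (R k)]) (Yd i i1 i2 j js m k).

Lemma X_valid N n (E : rel nat) m i i1 i2 j js k w :
  1 <= i <= N -> E i1 i -> E i2 i -> i1 != i2 -> 1 <= j <= m ->
  1 <= k <= m -> 1 <= i2 <= N -> w \in iota 1 m -> w != j -> i != i2 ->
  valid (hyps N n E m i1 i2) (Xd i i1 i2 j js m k).
Proof.
move=> Hi E1 E2 n12 Hj Hk Hi2 wi wj ni2.
have Ck : forall k', 1 <= k' <= m -> hyps N n E m i1 i2 [:: neg (P i1 k'); pos (R k')].
  by move=> k' Hk'; exists [:: neg (P i1 k'); pos (R k')]; split => //; right; exists k'; split => //; left.
rewrite /Xd; case: eqP => [_|/eqP nj]; first exact: Ck.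
have VY := @Y_valid N n E m i i1 i2 j js k Hi E1 E2 n12 Hj Hk nj Hi2.
case: ifP => c //=; split => //; first by rewrite !inE eqxx orbT.
- by apply: (@Y_sup _ _ _ _ _ _ _ _ _ wi wj n12 ni2); rewrite !inE eqxx orbT.
- exact: Ck.
Qed.

Lemma X_negP i i1 i2 j js m k w : w \in iota 1 m -> w != j -> i1 != i2 -> i != i2 ->
  neg (P i1 k) \in concl (Xd i i1 i2 j js m k).
Proof.
move=> wi wj n12 ni2; rewrite /Xd; case: eqP => [->|/eqP nj]; first by rewrite mem_head.
case: ifP => c /=; first by apply: (@Y_sup _ _ _ _ _ _ _ _ _ wi wj n12 ni2); rewrite mem_head.
by rewrite mem_resolvent mem_head.
Qed.

Lemma X_sub i i1 i2 j js m k l : l \in concl (Xd i i1 i2 j js m k) ->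
  (l == neg (P i1 k)) || (l \in target i j js).
Proof.
rewrite /Xd; case: eqP => [->|/eqP nj].
  by rewrite /= !inE => /orP[]/eqP->; rewrite ?eqxx ?tgt_r ?orbT.
case: ifP => c.
  move/Y_sub => /orP[->//|/orP[/eqP->|->]]; by rewrite ?tgt_negR ?orbT.
rewrite /= mem_resolvent => /orP[/andP[]|/andP[/Y_sub H ln]].
  by rewrite !inE => /orP[]/eqP-> //; rewrite eqxx.
by move: H; rewrite (negbTE ln).
Qed.

Lemma X_sup i i1 i2 j js m k w l : w \in iota 1 m -> w != j -> i1 != i2 -> i != i2 ->
  k != j -> (l \in [:: neg (P i j); pos (R j)]) || ((k \in js) && (l == neg (R k))) ->
  l \in concl (Xd i i1 i2 j js m k).
Proof.
move=> wi wj n12 ni2 nj Hl; rewrite /Xd (negbTE nj).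
case: ifP => c.
  apply: (@Y_sup _ _ _ _ _ _ _ _ _ wi wj n12 ni2); move: Hl; rewrite !inE.
  by case/orP => [/orP[]->|/andP[_ ->]]; rewrite ?orbT.
move: Hl; rewrite c /= orbF => Hl.
rewrite mem_resolvent; apply/orP; right; apply/andP; split.
  by apply: (@Y_sup _ _ _ _ _ _ _ _ _ wi wj n12 ni2); move: Hl; rewrite !inE => /orP[]->; rewrite ?orbT.
by move: Hl; rewrite !inE => /orP[]/eqP->; apply/eqP => -[].
Qed.

Lemma X_res i i1 i2 j js m k v : v \in resvars (Xd i i1 i2 j js m k) ->
  (exists2 k2, 1 <= k2 <= m & v = P i2 k2) \/
  (exists k2, [/\ v = R k2, k2 != j & k2 \notin js]).
Proof.
rewrite /Xd; case: eqP => [//|/eqP nj].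
case: ifP => c.
  by case/Y_res => [H|[k2 [? ? ? _]]]; [left | right; exists k2].
rewrite /= inE => /orP[/eqP->|]; first by right; exists k; rewrite c.
move=> /Y_res [H|[k2 [? ? ? _]]]; [by left | by right; exists k2].
Qed.

Lemma X_reg i i1 i2 j js m k : path_regular (Xd i i1 i2 j js m k).
Proof.
rewrite /Xd; case: eqP => [//|/eqP nj].
case: ifP => c; first exact: Y_reg.
rewrite /= Y_reg andbT; apply/negP => /Y_res [[k2 _ //]|[k2 [[e] _ _]]].
by rewrite e eqxx.
Qed.

Lemma X_size i i1 i2 j js m k : dsize (Xd i i1 i2 j js m k) <= 3 + m * 4.
Proof.
have := Y_size i i1 i2 j js m k.
rewrite /Xd; case: eqP => _; first by [].
case: ifP => _ /=; lia.
Qed.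

Definition Dd i i1 i2 j js m :=
  chainP i1 (iota 1 m) (Xd i i1 i2 j js m) (Leaf (cover i1 m)).

Lemma tgt_inv i j js v b : (v, b) \in target i j js ->
  (exists x, v = R x /\ ((x \in js) || (x == j))) \/ v = P i j.
Proof.
rewrite mem_cat => /orP[/mapP [x xj [-> _]]|]; first by left; exists x; rewrite xj.
rewrite !inE => /orP[/eqP [-> _]|/eqP [-> _]]; first by right.
by left; exists j; rewrite eqxx orbT.
Qed.

Theorem main_thm :
  exists c : nat,
  forall (N n : nat) (E : rel nat) (m i i1 i2 j : nat) (js : seq nat),
    stone_dag N n E -> N <= m ->
    1 <= i <= N -> i <= n ->
    E i1 i -> E i2 i -> i1 != i2 ->
    1 <= j <= m ->
    (forall x, x \in js -> 1 <= x <= m) ->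
    j \notin js ->
    exists d : deriv,
      [/\ valid (hyps N n E m i1 i2) d,
          concl d =i target i j js,
          regular_of (target i j js) d,
          dsize d <= c * m ^ 2
        & forall v, v \in resvars d ->
            (exists k, [/\ v = R k, k != j & k \notin js]) \/
            (exists k, 1 <= k <= m /\ (v = P i1 k \/ v = P i2 k))].
Proof.
exists 10 => N n E m i i1 i2 j js [Hed _ _ _] Nm Hi Hin E1 E2 n12 Hj Hjs jnj.
have [_ ii1 i1N] := Hed _ _ E1.
have [_ ii2 i2N] := Hed _ _ E2.
have ni2 : i != i2 by rewrite neq_ltn ii2.
have ni1 : i != i1 by rewrite neq_ltn ii1.
have Hi1 : 1 <= i1 <= N by lia.
have Hi2 : 1 <= i2 <= N by lia.
have m2 : 2 <= m by lia.
pose w := if j == 1 then 2 else 1.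
have wi : w \in iota 1 m by rewrite mem_iota /w; case: (j =P 1) => _; lia.
have wj : w != j by rewrite /w; case: (j =P 1) => e; apply/eqP; lia.
have RV : forall v, v \in resvars (Dd i i1 i2 j js m) ->
            (exists k, [/\ v = R k, k != j & k \notin js]) \/
            (exists k, 1 <= k <= m /\ (v = P i1 k \/ v = P i2 k)).
  move=> v /chain_resvars [//|[k kk [->|/X_res [[k2 Hk2 ->]|H]]]].
  - by right; exists k; split => //; [move: kk; rewrite mem_iota; lia | left].
  - by right; exists k2; split => //; right.
  - by left.
exists (Dd i i1 i2 j js m); split => //.
- apply: chain_valid; last exact: iota_uniq.
  + exists (cover i1 m); split => //; left; apply: Or41; by exists i1.
  + move=> k; rewrite mem_iota => Hk; split; last exact: (@X_negP _ _ _ _ _ _ _ w).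
    apply: (@X_valid _ _ _ _ _ _ _ _ _ _ w) => //; lia.
  + move=> k2 kk; exact: (map_f (fun y => pos (P i1 y))).
- move=> l; apply/idP/idP.
  + case/chain_concl_sub => [[/= /mapP [k2 kk ->] H]|[k2 kk /andP [lz ln]]].
      by have := H _ kk; rewrite eqxx.
    move: (@X_sub _ _ _ _ _ _ _ _ lz); by rewrite (negbTE ln).
  + move=> lt; have lp : forall k', l != pos (P i1 k').
      move=> k'; apply/eqP => e; move: lt; rewrite e => /tgt_inv [[x [H _]]|H]; first by case: H.
      by case: H => e' _; rewrite e' eqxx in ni1.
    move: (lt); rewrite mem_cat => /orP[/mapP [x xj ->]|lt2].
      have xnj : x != j by apply/eqP => e; rewrite -e xj in jnj.
      apply: (@chain_concl_sup _ _ _ _ _ x) => //.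
      * by rewrite mem_iota; have := Hjs _ xj; lia.
      * by apply: (@X_sup _ _ _ _ _ _ _ _ _ wi wj n12 ni2 xnj); rewrite xj eqxx orbT.
    apply: (@chain_concl_sup _ _ _ _ _ w) => //.
    * by apply: (@X_sup _ _ _ _ _ _ _ _ _ wi wj n12 ni2 wj); rewrite lt2.
    * move: lt2; rewrite !inE => /orP[]/eqP -> //; apply/eqP => -[e].
      by rewrite e eqxx in ni1.
- split.
  + apply: chain_regular => //.
    * by move=> *; exact: X_reg.
    * exact: iota_uniq.
    * move=> k1 k2 _ _; apply/negP => /X_res [[k3 _ [e _]]|[k3 [//]]].
      by rewrite e eqxx in n12.
  + move=> v /RV Hv b; apply/negP => /tgt_inv [[x [e hx]]|e]; subst v.
      case: Hv => [[k [[ek] kj kjs]]|[k [_ [H|H]]]]; try by case: H.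
      by move: hx; rewrite ek (negbTE kj) (negbTE kjs).
    case: Hv => [[k [//]]|[k [_ [[e _]|[e _]]]]].
      by rewrite e eqxx in ni1.
    by rewrite e eqxx in ni2.
- have := @chain_size i1 (iota 1 m) (Xd i i1 i2 j js m) (Leaf (cover i1 m)) (3 + m * 4).
  rewrite size_iota => /(_ (fun k _ => X_size i i1 i2 j js m k)) /= H.
  apply: leq_trans H _; nia.
Qed.

Theorem theorem2p3 :
  exists c : nat,
  forall (N n : nat) (E : rel nat) (m i i1 i2 j : nat) (js : seq nat),
    stone_dag N n E -> N <= m ->
    1 <= i <= N -> i <= n ->
    E i1 i -> E i2 i -> i1 != i2 ->
    1 <= j <= m ->
    (forall x, x \in js -> 1 <= x <= m) ->
    j \notin js ->
    exists d : deriv,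
      [/\ valid (hyps N n E m i1 i2) d,
          concl d =i target i j js,
          regular_of (target i j js) d,
          dsize d <= c * m ^ 2
        & forall v, v \in resvars d ->
            (exists k, [/\ v = R k, k != j & k \notin js]) \/
            (exists k, 1 <= k <= m /\ (v = P i1 k \/ v = P i2 k))].
Proof. exact: main_thm. Qed.
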